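(* For any topologically reasonable pointclass $\Gamma$, $\Gamma(\mathbb{D})$ implies $\Gamma(\mathbb{C})$; that is, if every set in $\Gamma$ has the Baire property with respect to the dominating topology $\mathcal{D}$ on $\omega^\omega$, then every set in $\Gamma$ has the Baire property with respect to the standard (Baire space, resp. Cantor space) topology.
   Context: For $N\in\omega$ and $f\in\omega^\omega$ put $[N,f]=\{x\in\omega^\omega: f{\restriction}N\subseteq x \text{ and } x(n)\ge f(n)\text{ for all }n\}$. The sets $[N,f]$ form a base of a topology $\mathcal{D}$ on $\omega^\omega$, the dominating topology (it refines the usual Baire space topology). $\mathbb{D}$ (Hechler forcing) is $\omega\times\omega^\omega$ with $(N,f)\le(M,g)$ iff $N\ge M$, $f{\restriction}M=g{\restriction}M$ and $f\ge g$ pointwise; $\mathbb{C}$ is Cohen forcing $\omega^{<\omega}$ (or $2^{<\omega}$) ordered by reverse inclusion. $\Gamma(\mathbb{D})$ means every set in $\Gamma$ (of subsets of $\omega^\omega$) has the Baire property in $\mathcal{D}$; $\Gamma(\mathbb{C})$ means every set in $\Gamma$ has the Baire property in the usual topology of $\omega^\omega$ or $2^\omega$. A pointclass $\Gamma$ is topologically reasonable if it is closed under continuous preimages and $A\cap Q\in\Gamma$ whenever $A\in\Gamma$ and $Q$ is closed. *)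

(* Defs.v *)
From Stdlib Require Import Arith.

Definition baire := nat -> nat.
Definition pset := baire -> Prop.

Definition agree (n : nat) (x y : baire) : Prop := forall i, i < n -> x i = y i.

Definition open_std (U : pset) : Prop :=
  forall x, U x -> exists n, forall y, agree n x y -> U y.
Definition closed_std (Q : pset) : Prop := open_std (fun x => ~ Q x).
Definition continuous_std (f : baire -> baire) : Prop :=
  forall x n, exists m, forall y, agree m x y -> agree n (f x) (f y).

Definition dom_basic (N : nat) (f : baire) : pset :=
  fun x => agree N f x /\ forall n, f n <= x n.
Definition open_dom (U : pset) : Prop :=
  forall x, U x -> exists N f, dom_basic N f x /\ forall y, dom_basic N f y -> U y.

Section Category.
Variable op : pset -> Prop.

Definition closure (A : pset) : pset :=
  fun x => forall U, op U -> U x -> exists y, U y /\ A y.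
Definition nowhere_dense (A : pset) : Prop :=
  forall U, op U -> (forall x, U x -> closure A x) -> forall x, ~ U x.
Definition meager (A : pset) : Prop :=
  exists F : nat -> pset, (forall k, nowhere_dense (F k)) /\
    forall x, A x -> exists k, F k x.
Definition baire_property (A : pset) : Prop :=
  exists U, op U /\ meager (fun x => ~ (A x <-> U x)).
End Category.

Definition pointclass := pset -> Prop.

Definition topologically_reasonable (G : pointclass) : Prop :=
  (forall A f, G A -> continuous_std f -> G (fun x => A (f x))) /\
  (forall A Q, G A -> closed_std Q -> G (fun x => A x /\ Q x)).

Definition Gamma_D (G : pointclass) : Prop :=
  forall A, G A -> baire_property open_dom A.
Definition Gamma_C (G : pointclass) : Prop :=
  forall A, G A -> baire_property open_std A.

(* Main.v *)
Require Import Defs.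
From Stdlib Require Import Arith Lia List Classical ClassicalEpsilon FunctionalExtensionality.
From Stdlib Require Cantor.
Import ListNotations.

Definition c (m : nat) : nat := m - Nat.sqrt m * Nat.sqrt m.
Definition cinv (k v : nat) : nat := let j := Nat.max v k in j * j + v.

Lemma cinv_spec k v : c (cinv k v) = v /\ k <= cinv k v.
Proof.
  unfold c, cinv. set (j := Nat.max v k).
  assert (Hs : Nat.sqrt (j * j + v) = j).
  { apply Nat.sqrt_unique. unfold j. split; nia. }
  rewrite Hs. split; [lia|]. unfold j; nia.
Qed.

Definition phi (x : baire) : baire := fun n => c (x n).

Lemma phi_cont : continuous_std phi.
Proof. intros x n. exists n. intros y H i Hi. unfold phi. now rewrite H. Qed.

Definition lst (f : baire) (n : nat) : list nat := map f (seq 0 n).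
Lemma lst_len f n : length (lst f n) = n.
Proof. unfold lst. now rewrite length_map, length_seq. Qed.
Lemma lst_nth f n i d : i < n -> nth i (lst f n) d = f i.
Proof.
  intros H. unfold lst. rewrite (nth_indep _ d (f 0)) by (rewrite length_map, length_seq; lia).
  rewrite map_nth, seq_nth by lia. reflexivity.
Qed.

Definition cyl (l : list nat) (z : baire) : Prop := forall i, i < length l -> nth i l 0 = z i.

Lemma dom_inter N f N1 f1 y :
  dom_basic N f y -> dom_basic N1 f1 y ->
  let h := fun i => Nat.max (f i) (f1 i) in
  dom_basic (Nat.max N N1) h y /\ agree N f h /\ (forall i, f i <= h i) /\
  (forall w, dom_basic (Nat.max N N1) h w -> dom_basic N f w /\ dom_basic N1 f1 w).
Proof.
  intros [A1 B1] [A2 B2] h.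
  assert (E1 : forall i, i < N -> h i = f i).
  { intros i Hi. unfold h. rewrite (A1 i Hi). specialize (B2 i). lia. }
  assert (E2 : forall i, i < N1 -> h i = f1 i).
  { intros i Hi. unfold h. rewrite (A2 i Hi). specialize (B1 i). lia. }
  split; [|split; [|split]].
  - split.
    + intros i Hi. destruct (Nat.lt_ge_cases i N).
      * rewrite E1 by lia. apply A1; lia.
      * rewrite E2 by lia. apply A2; lia.
    + intros i. unfold h. specialize (B1 i); specialize (B2 i); lia.
  - intros i Hi. now rewrite E1.
  - intros i. unfold h. lia.
  - intros w [Aw Bw]. split; split.
    + intros i Hi. rewrite <- (E1 i Hi). apply Aw. lia.
    + intros i. specialize (Bw i). unfold h in Bw. lia.
    + intros i Hi. rewrite <- (E2 i Hi). apply Aw. lia.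
    + intros i. specialize (Bw i). unfold h in Bw. lia.
Qed.

Lemma dom_basic_open N f : open_dom (dom_basic N f).
Proof. intros x Hx. exists N, x. split. { split; [intros i _; reflexivity | intros; lia]. }
  intros y [Ay By]. destruct Hx as [Ax Bx]. split.
  - intros i Hi. rewrite (Ax i Hi). apply Ay, Hi.
  - intros i. specialize (Bx i); specialize (By i); lia.
Qed.

Lemma dnwd X : nowhere_dense open_dom X -> forall N f, exists N' f',
  N <= N' /\ agree N f f' /\ (forall i, f i <= f' i) /\ forall y, dom_basic N' f' y -> ~ X y.
Proof.
  intros HX N f. apply NNPP. intros Hn.
  apply (HX (dom_basic N f) (dom_basic_open N f)) with (x := f).
  2: { split; [intros i _; reflexivity | intros; lia]. }
  intros x Hx U HU HUx. destruct (HU x HUx) as (N1 & f1 & Hx1 & HsU).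
  destruct (dom_inter N f N1 f1 x Hx Hx1) as (Hh & Ag & Le & Sub).
  apply NNPP. intros Hno. apply Hn.
  exists (Nat.max N N1), (fun i => Nat.max (f i) (f1 i)).
  split; [lia|]. split; [exact Ag|]. split; [exact Le|].
  intros y Hy HXy. apply Hno. exists y. split; [|exact HXy].
  apply HsU. apply (Sub y Hy).
Qed.

Lemma snwd X : (forall n x, exists n' w, (forall z, agree n' w z -> agree n x z) /\
   (forall z, agree n' w z -> ~ X z)) -> nowhere_dense open_std X.
Proof.
  intros H U HU Hcl x Ux. destruct (HU x Ux) as [n Hn].
  destruct (H n x) as (n' & w & H1 & H2).
  assert (Uw : U w) by (apply Hn, H1; intros i _; reflexivity).
  destruct (Hcl w Uw (agree n' w)) as (y & Hy & HXy).
  - intros z Hz. exists n'. intros y Hy i Hi. rewrite (Hz i Hi). apply Hy, Hi.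
  - intros i _. reflexivity.
  - exact (H2 y Hy HXy).
Qed.

Lemma empty_nwd op : nowhere_dense op (fun _ => False).
Proof. intros U HU Hcl x Ux. destruct (Hcl x Ux U HU Ux) as (y & _ & []). Qed.

Fixpoint fl (k n : nat) : list nat :=
  match k with 0 => nil | S k => let (a, b) := Cantor.of_nat n in a :: fl k b end.
Definition el (n : nat) : list nat := let (k, m) := Cantor.of_nat n in fl k m.
Lemma el_surj l : exists n, el n = l.
Proof.
  assert (forall l, exists m, fl (length l) m = l).
  { induction l0 as [|a l0 IH]; [exists 0; reflexivity|].
    destruct IH as [m Hm]. exists (Cantor.to_nat (a, m)). cbn [fl length].
    rewrite Cantor.cancel_of_to. now rewrite Hm. }
  destruct (H l) as [m Hm]. exists (Cantor.to_nat (length l, m)). unfold el.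
  rewrite Cantor.cancel_of_to. exact Hm.
Qed.

Definition ext (s : list nat) (g : baire) : baire :=
  fun i => if i <? length s then nth i s 0 else g i.
Lemma ext_lt s g i : i < length s -> ext s g i = nth i s 0.
Proof. intros H. unfold ext. now rewrite (proj2 (Nat.ltb_lt _ _) H). Qed.
Lemma ext_ge s g i : length s <= i -> ext s g i = g i.
Proof. intros H. unfold ext. now rewrite (proj2 (Nat.ltb_ge _ _) H). Qed.

Definition avoid (F : nat -> pset) j p g := forall y, dom_basic (length p) (ext p g) y -> ~ F j y.
Definition good F j p := exists g, avoid F j p g.
Lemma exW F j p : exists g, good F j p -> avoid F j p g.
Proof. destruct (classic (good F j p)) as [[g Hg]|Hn]; [exists g; auto | exists (fun _ => 0); tauto]. Qed.
Definition W F j p : baire := proj1_sig (constructive_indefinite_description _ (exW F j p)).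
Lemma W_spec F j p : good F j p -> avoid F j p (W F j p).
Proof. unfold W. destruct (constructive_indefinite_description _ _); auto. Qed.

Fixpoint mx (a : nat) (h : nat -> nat) : nat :=
  match a with 0 => h 0 | S a => Nat.max (mx a h) (h (S a)) end.
Lemma mx_ge a h n : n <= a -> h n <= mx a h.
Proof.
  induction a; intros Hn; simpl.
  - replace n with 0 by lia. lia.
  - destruct (Nat.eq_dec n (S a)) as [->|Hne]; [lia|]. specialize (IHa ltac:(lia)). lia.
Qed.

Definition G F (f0 : baire) (s : list nat) : baire := fun i =>
  Nat.max (f0 i) (mx (length s) (fun n => mx (length s) (fun j => W F j (firstn n s) i))).
Lemma G_ge0 F f0 s i : f0 i <= G F f0 s i.
Proof. unfold G. lia. Qed.
Lemma G_geW F f0 s i n j : n <= length s -> j <= length s -> W F j (firstn n s) i <= G F f0 s i.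
Proof.
  intros Hn Hj. unfold G.
  pose proof (mx_ge (length s) (fun j => W F j (firstn n s) i) j Hj).
  pose proof (mx_ge (length s) (fun n => mx (length s) (fun j => W F j (firstn n s) i)) n Hn).
  simpl in *. lia.
Qed.

Definition pre (s t : list nat) := length s <= length t /\ forall i, i < length s -> nth i s 0 = nth i t 0.
Lemma pre_trans s t u : pre s t -> pre t u -> pre s u.
Proof. intros [A B] [C D]. split; [lia|]. intros i Hi. rewrite B by lia. apply D; lia. Qed.
Lemma pre_firstn s t : pre s t -> firstn (length s) t = s.
Proof.
  intros [A B]. apply nth_ext with 0 0.
  - rewrite length_firstn. lia.
  - intros i Hi. rewrite length_firstn in Hi. rewrite nth_firstn.
    rewrite (proj2 (Nat.ltb_lt i (length s))) by lia. symmetry. apply B. lia.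
Qed.

Definition pcyl (s : list nat) (z : baire) := forall i, i < length s -> c (nth i s 0) = z i.

Definition step F f0 k s s' := pre s s' /\ length s < length s' /\
  (forall i, length s <= i < length s' -> G F f0 s i <= nth i s' 0) /\ good F k s'.
Definition Bad F f0 k s : pset := fun z => pcyl s z /\ ~ exists s', step F f0 k s s' /\ pcyl s' z.

Lemma Bad_nwd F f0 k s : nowhere_dense open_dom (F k) -> nowhere_dense open_std (Bad F f0 k s).
Proof.
  intros HF. apply snwd. intros n x.
  destruct (classic (exists z0, agree n x z0 /\ pcyl s z0)) as [[z0 [Hz1 Hz2]]|Hno].
  2: { exists n, x. split; [auto|]. intros z Hz [Hb _]. apply Hno. exists z; auto. }
  set (m := S (Nat.max n (length s))).
  set (tf := fun i => if i <? length s then nth i s 0 else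
                      if i <? m then cinv (G F f0 s i) (z0 i) else G F f0 s i).
  destruct (dnwd _ HF m tf) as (N' & f' & Hm & Ag & Le & Av).
  exists N', (phi f'). split.
  - intros z Hz i Hi. rewrite (Hz1 i Hi). rewrite <- (Hz i ltac:(lia)). unfold phi.
    rewrite <- (Ag i ltac:(lia)). unfold tf.
    destruct (Nat.ltb_spec i (length s)).
    + symmetry. apply Hz2. exact H.
    + rewrite (proj2 (Nat.ltb_lt i m)) by lia. symmetry. apply cinv_spec.
  - intros z Hz [_ Hb]. apply Hb. exists (lst f' N'). split.
    + split; [|split; [|split]].
      * unfold pre. rewrite lst_len. split; [lia|]. intros i Hi. rewrite lst_nth by lia.
        rewrite <- (Ag i ltac:(lia)). unfold tf. now rewrite (proj2 (Nat.ltb_lt _ _) Hi).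
      * rewrite lst_len. lia.
      * intros i Hi. rewrite lst_len in Hi. rewrite lst_nth by lia.
        specialize (Le i). unfold tf in Le.
        rewrite (proj2 (Nat.ltb_ge i (length s))) in Le by lia.
        destruct (Nat.ltb_spec i m).
        -- pose proof (proj2 (cinv_spec (G F f0 s i) (z0 i))). lia.
        -- lia.
      * exists f'. intros y [Ay By]. apply Av. split.
        -- intros i Hi. rewrite lst_len in Ay. rewrite <- Ay by lia. rewrite ext_lt by (rewrite lst_len; lia).
           rewrite lst_nth by lia. reflexivity.
        -- intros i. specialize (By i). destruct (Nat.lt_ge_cases i N').
           ++ rewrite ext_lt in By by (rewrite lst_len; lia). rewrite lst_nth in By by lia. exact By.
           ++ rewrite ext_ge in By by (rewrite lst_len; lia). exact By.
    + intros i Hi. rewrite lst_len in Hi. rewrite lst_nth by lia. apply Hz. exact Hi.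
Qed.

Lemma Lmain (F : nat -> pset) (HF : forall k, nowhere_dense open_dom (F k)) N0 f0 (E : pset)
  (H : forall x, dom_basic N0 f0 x -> E (phi x) -> exists k, F k x) :
  meager open_std (fun z => agree N0 (phi f0) z /\ E z).
Proof.
  exists (fun n => let (a, b) := Cantor.of_nat n in Bad F f0 a (el b)). split.
  { intros n. destruct (Cantor.of_nat n). apply Bad_nwd, HF. }
  intros z [Hz HE]. apply NNPP; intro Hno.
  assert (NB : forall k s, ~ Bad F f0 k s z).
  { intros k s Hb. apply Hno. destruct (el_surj s) as [b Hb'].
    exists (Cantor.to_nat (k, b)). rewrite Cantor.cancel_of_to, Hb'. exact Hb. }
  set (nextf := fun k s => epsilon (inhabits nil) (fun s' => step F f0 k s s' /\ pcyl s' z)).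
  assert (Hnext : forall k s, pcyl s z -> step F f0 k s (nextf k s) /\ pcyl (nextf k s) z).
  { intros k s Hs. unfold nextf. apply epsilon_spec.
    apply NNPP. intros Hn. apply (NB k s). split; auto. }
  set (st := fix st k := match k with 0 => lst f0 N0 | S k => nextf k (st k) end).
  assert (stS : forall k, st (S k) = nextf k (st k)) by reflexivity.
  assert (st0 : st 0 = lst f0 N0) by reflexivity.
  clearbody st.
  assert (Pc : forall k, pcyl (st k) z).
  { induction k.
    - rewrite st0. intros i Hi. rewrite lst_len in Hi. rewrite lst_nth by lia. apply Hz, Hi.
    - rewrite stS. apply Hnext, IHk. }
  assert (Stp : forall k, step F f0 k (st k) (st (S k))).
  { intros k. rewrite stS. apply Hnext, Pc. }
  assert (lenS : forall k, length (st k) < length (st (S k))).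
  { intros k. apply (Stp k). }
  assert (preS : forall k, pre (st k) (st (S k))) by (intros k; apply (Stp k)).
  assert (preJ : forall d j, pre (st j) (st (d + j))).
  { induction d; intros j.
    - simpl. split; [lia| auto].
    - apply pre_trans with (st (d + j)); [apply IHd| apply preS]. }
  assert (mono : forall j k, j <= k -> length (st j) <= length (st k)).
  { intros j k Hjk. replace k with ((k - j) + j) by lia. apply preJ. }
  assert (preL : forall j k, j <= k -> pre (st j) (st k)).
  { intros j k Hjk. replace k with ((k - j) + j) by lia. apply preJ. }
  assert (lenk : forall k, k <= length (st k)).
  { induction k; [lia|]. specialize (lenS k). lia. }
  assert (smono : forall j k, length (st j) < length (st k) -> j < k).
  { intros j k Hl. destruct (Nat.lt_ge_cases j k); [auto|]. specialize (mono k j H0). lia. }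
  set (x := fun i => nth i (st (S i)) 0).
  assert (key : forall k i, i < length (st k) -> x i = nth i (st k) 0).
  { intros k i Hi. unfold x. set (K := Nat.max k (S i)).
    destruct (preL k K ltac:(lia)) as [_ B1]. destruct (preL (S i) K ltac:(lia)) as [_ B2].
    rewrite B1 by exact Hi. apply B2. specialize (lenk (S i)). lia. }
  assert (intv : forall i, length (st 0) <= i -> exists m, length (st m) <= i < length (st (S m))).
  { intros i Hi. assert (forall M, i < length (st M) -> exists m, length (st m) <= i < length (st (S m))).
    { induction M; intros HM; [lia|].
      destruct (Nat.lt_ge_cases i (length (st M))); [auto|]. exists M; lia. }
    apply (H0 (S i)). specialize (lenk (S i)). lia. }
  assert (lb : forall m i, length (st m) <= i < length (st (S m)) -> G F f0 (st m) i <= x i).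
  { intros m i Hi. rewrite (key (S m) i) by lia. apply (Stp m). exact Hi. }
  assert (Hx : dom_basic N0 f0 x).
  { assert (L0 : length (st 0) = N0) by (rewrite st0; apply lst_len).
    split.
    - intros i Hi. rewrite (key 0 i) by lia. rewrite st0, lst_nth by lia. reflexivity.
    - intros i. destruct (Nat.lt_ge_cases i N0).
      + rewrite (key 0 i) by lia. rewrite st0, lst_nth by lia. lia.
      + destruct (intv i ltac:(lia)) as [m Hm]. specialize (lb m i Hm).
        pose proof (G_ge0 F f0 (st m) i). lia. }
  assert (Hphi : phi x = z).
  { apply functional_extensionality. intros i. unfold phi, x.
    apply (Pc (S i)). specialize (lenk (S i)). lia. }
  assert (Hnot : forall k, ~ F k x).
  { intros k. destruct (Stp k) as (_ & _ & _ & Hg).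
    apply (W_spec F k (st (S k)) Hg). split.
    - intros i Hi. rewrite ext_lt by exact Hi. symmetry. apply key, Hi.
    - intros i. destruct (Nat.lt_ge_cases i (length (st (S k)))).
      + rewrite ext_lt by auto. rewrite (key (S k) i) by auto. lia.
      + rewrite ext_ge by auto. destruct (intv i ltac:(specialize (mono 0 (S k)); lia)) as [m Hm].
        assert (Hkm : S k <= m) by (specialize (smono (S k) (S m) ltac:(lia)); lia).
        specialize (lb m i Hm).
        pose proof (G_geW F f0 (st m) i (length (st (S k))) k (mono _ _ Hkm)
           ltac:(specialize (lenk m); lia)).
        rewrite (pre_firstn _ _ (preL _ _ Hkm)) in H1. lia. }
  destruct (H x Hx) as [k Hk]; [rewrite Hphi; exact HE|].
  exact (Hnot k Hk).
Qed.

Lemma meager_mono op (S T : pset) : meager op S -> (forall z, T z -> S z) -> meager op T.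
Proof. intros [Fm [H1 H2]] HT. exists Fm. split; auto. Qed.

Lemma exfam (P : Prop) (S : pset) : (P -> meager open_std S) ->
  exists Fm : nat -> pset, (forall k, nowhere_dense open_std (Fm k)) /\ (P -> forall z, S z -> exists k, Fm k z).
Proof.
  intros H. destruct (classic P) as [HP|HP].
  - destruct (H HP) as [Fm [A B]]. exists Fm. auto.
  - exists (fun _ _ => False). split; [intros; apply empty_nwd| tauto].
Qed.

Theorem theorem3p1 (G : pointclass) :
  topologically_reasonable G -> Gamma_D G -> Gamma_C G.
Proof.
  intros [Hcont _] HD A HA.
  set (B := fun x => A (phi x)).
  assert (HB : G B) by exact (Hcont A phi HA phi_cont).
  destruct (HD B HB) as (U & HU & FD & HFD & Hcov).
  set (Q1 := fun l => exists f, (forall i, i < length l -> c (f i) = nth i l 0) /\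
                     forall y, dom_basic (length l) f y -> U y).
  set (Q2 := fun l => exists f, (forall i, i < length l -> c (f i) = nth i l 0) /\
                     forall y, dom_basic (length l) f y -> ~ U y).
  assert (cylag : forall l f z, (forall i, i < length l -> c (f i) = nth i l 0) -> cyl l z ->
            agree (length l) (phi f) z).
  { intros l f z Hf Hz i Hi. unfold phi. rewrite Hf by exact Hi. apply Hz, Hi. }
  assert (m1 : forall l, Q1 l -> meager open_std (fun z => cyl l z /\ ~ A z)).
  { intros l [f [Hf HU']]. eapply meager_mono.
    - apply (Lmain FD HFD (length l) f (fun z => ~ A z)).
      intros x Hx HnA. apply Hcov. intros [H1 H2]. apply HnA. apply H2, HU', Hx.
    - intros z [Hz Hn]. split; [apply cylag with (1 := Hf); exact Hz| exact Hn]. }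
  assert (m2 : forall l, Q2 l -> meager open_std (fun z => cyl l z /\ A z)).
  { intros l [f [Hf HU']]. eapply meager_mono.
    - apply (Lmain FD HFD (length l) f A).
      intros x Hx HA'. apply Hcov. intros [H1 H2]. apply (HU' x Hx). apply H1, HA'.
    - intros z [Hz Hn]. split; [apply cylag with (1 := Hf); exact Hz| exact Hn]. }
  set (M1 := fun l => proj1_sig (constructive_indefinite_description _ (exfam _ _ (m1 l)))).
  set (M2 := fun l => proj1_sig (constructive_indefinite_description _ (exfam _ _ (m2 l)))).
  assert (HM1 : forall l, (forall k, nowhere_dense open_std (M1 l k)) /\
            (Q1 l -> forall z, cyl l z /\ ~ A z -> exists k, M1 l k z)).
  { intros l. unfold M1. destruct (constructive_indefinite_description _ _). exact a. }
  assert (HM2 : forall l, (forall k, nowhere_dense open_std (M2 l k)) /\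
            (Q2 l -> forall z, cyl l z /\ A z -> exists k, M2 l k z)).
  { intros l. unfold M2. destruct (constructive_indefinite_description _ _). exact a. }
  clearbody M1 M2.
  set (R := fun z => ~ (exists l, Q1 l /\ cyl l z) /\ ~ (exists l, Q2 l /\ cyl l z)).
  assert (HR : nowhere_dense open_std R).
  { apply snwd. intros n x.
    set (f := fun i => cinv 0 (x i)).
    destruct (classic (exists y, dom_basic n f y /\ U y)) as [[y [Hy Uy]]|Hno].
    - destruct (HU y Uy) as (N1 & f1 & Hy1 & Hs).
      destruct (dom_inter n f N1 f1 y Hy Hy1) as (Hh & Ag & Le & Sub).
      set (h := fun i => Nat.max (f i) (f1 i)) in *.
      exists (Nat.max n N1), (phi h). split.
      + intros z Hz i Hi. rewrite <- (Hz i ltac:(lia)). unfold phi. rewrite <- (Ag i Hi).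
        unfold f. symmetry. apply cinv_spec.
      + intros z Hz [HR1 _]. apply HR1. exists (lst (phi h) (Nat.max n N1)). split.
        * exists h. rewrite lst_len. split.
          -- intros i Hi. rewrite lst_nth by exact Hi. reflexivity.
          -- intros w Hw. apply Hs. apply (Sub w Hw).
        * intros i Hi. rewrite lst_len in Hi. rewrite lst_nth by exact Hi. apply Hz, Hi.
    - exists n, x. split; [auto|]. intros z Hz [_ HR2]. apply HR2.
      exists (lst x n). split.
      + exists f. rewrite lst_len. split.
        * intros i Hi. rewrite lst_nth by exact Hi. unfold f. apply cinv_spec.
        * intros w Hw Uw. apply Hno. exists w; auto.
      + intros i Hi. rewrite lst_len in Hi. rewrite lst_nth by exact Hi. apply Hz, Hi. }
  exists (fun z => exists l, Q1 l /\ cyl l z). split.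
  { intros z [l [Hl Hz]]. exists (length l). intros y Hy. exists l. split; [exact Hl|].
    intros i Hi. rewrite (Hz i Hi). apply Hy, Hi. }
  exists (fun n => let (a, m) := Cantor.of_nat n in let (p, k) := Cantor.of_nat m in
    match a with 0 => R | 1 => M1 (el p) k | _ => M2 (el p) k end).
  split.
  { intros n. destruct (Cantor.of_nat n) as [a m]. destruct (Cantor.of_nat m) as [p k].
    destruct a as [|[|a]]; [exact HR | apply HM1 | apply HM2]. }
  intros z Hz.
  destruct (classic (A z)) as [Az|nAz].
  - assert (nV : ~ exists l, Q1 l /\ cyl l z) by tauto.
    destruct (classic (exists l, Q2 l /\ cyl l z)) as [[l [Hl Hzl]]|n2].
    + destruct (proj2 (HM2 l) Hl z (conj Hzl Az)) as [k Hk].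
      destruct (el_surj l) as [p Hp].
      exists (Cantor.to_nat (2, Cantor.to_nat (p, k))).
      rewrite !Cantor.cancel_of_to. rewrite Hp. exact Hk.
    + exists (Cantor.to_nat (0, Cantor.to_nat (0, 0))).
      rewrite !Cantor.cancel_of_to. split; assumption.
  - assert (HV : exists l, Q1 l /\ cyl l z) by tauto.
    destruct HV as [l [Hl Hzl]].
    destruct (proj2 (HM1 l) Hl z (conj Hzl nAz)) as [k Hk].
    destruct (el_surj l) as [p Hp].
    exists (Cantor.to_nat (1, Cantor.to_nat (p, k))).
    rewrite !Cantor.cancel_of_to. rewrite Hp. exact Hk.
Qed.
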